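(* With $w_1=\alpha A+bC$, $u=\alpha B+bD$, $w_2=\delta D+cB$, $v=cA+\delta C$ (the entries of $\Omega=\mathsf dT\,T^{-1}$, where $T^{-1}=\begin{pmatrix}A&B\\C&D\end{pmatrix}$), the following hold in $\Gamma$: $w_1\alpha=-\alpha w_1-h\alpha u$, $w_1b=bw_1-hbu$, $w_1c=cw_1-hcu$, $w_1\delta=-\delta w_1-h\delta u$; $u$ commutes with $\alpha,b,c,\delta$; $v\alpha=\alpha v+h\alpha(w_1-w_2)$, $vb=bv-hb(w_1-w_2)$, $vc=cv-hc(w_1-w_2)$, $v\delta=\delta v+h\delta(w_1-w_2)$; $w_2\alpha=-\alpha w_2-h\alpha u$, $w_2b=bw_2-hbu$, $w_2c=cw_2-hcu$, $w_2\delta=-\delta w_2-h\delta u$.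
   Context: Let $h$ be an odd (Grassmann) parameter with $h^2=0$; even elements commute with everything and odd elements anticommute with each other. $\mathcal A$ is the $\mathbb Z_2$-graded algebra generated by even invertible $a,d$ and odd $\beta,\gamma$ ($h$ commuting with $a,d$, anticommuting with $\beta,\gamma$) subject to $a\beta=\beta a$, $a\gamma=\gamma a+h a^2(1-\mathcal D_h^{-1})$, $d\beta=\beta d$, $d\gamma=\gamma d+h d^2(\mathcal D_h-1)$, $\beta^2=0$, $\gamma^2=h\gamma d(1-\mathcal D_h)$, $\beta\gamma=-\gamma\beta+h\beta d(1-\mathcal D_h)$, $ad=da+h\beta d(\mathcal D_h-1)$, with $\mathcal D_h=ad^{-1}-\beta d^{-1}\gamma d^{-1}$; $T=\begin{pmatrix}a&\beta\\ \gamma&d\end{pmatrix}$ and $T^{-1}=\begin{pmatrix}a^{-1}+a^{-1}\beta d^{-1}\gamma a^{-1}&-a^{-1}\beta d^{-1}\\ -d^{-1}\gamma a^{-1}& d^{-1}+d^{-1}\gamma a^{-1}\beta d^{-1}\end{pmatrix}$. The differential algebra $\Gamma$ is the $\mathbb Z_2$-graded algebra generated by $\mathcal A$ together with odd elements $\alpha=\mathsf da,\ \delta=\mathsf dd$ and even elements $b=\mathsf d\beta,\ c=\mathsf d\gamma$ ($h$ anticommutes with $\alpha,\delta$), where $\mathsf d$ is an odd map with $\mathsf d^2=0$, graded Leibniz rule and $\mathsf dh=-h\mathsf d$, subject to the relations $a\alpha=\alpha a+h(\alpha\beta-ba)$, $ab=ba-hb\beta$, $ac=ca+h(\alpha a-c\beta+\delta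 a)$, $a\delta=\delta a+h(ba+\delta\beta)$; $\beta\alpha=-\alpha\beta+hb\beta$, $\beta b=b\beta$, $\beta c=c\beta+h(\alpha+\delta)\beta$, $\beta\delta=-\delta\beta-hb\beta$; $\gamma\alpha=-\alpha\gamma+h(\alpha a+\alpha d+b\gamma)$, $\gamma b=b\gamma+hb(a+d)$, $\gamma c=c\gamma+h(\alpha\gamma+ca+cd+\delta\gamma)$, $\gamma\delta=-\delta\gamma+h(\delta a+\delta d-b\gamma)$; $d\alpha=\alpha d-h(\alpha\beta+bd)$, $db=bd+hb\beta$, $dc=cd+h(\alpha d+c\beta+\delta d)$, $d\delta=\delta d+h(bd-\delta\beta)$; and $\alpha b=b\alpha+hb^2$, $\alpha c=c\alpha+h(cb+\delta\alpha)$, $\delta b=b\delta-hb^2$, $\delta c=c\delta-h(cb-\alpha\delta)$, $\alpha^2=h\alpha b$, $\alpha\delta=-\delta\alpha+h(\delta-\alpha)b$, $\delta^2=-h\delta b$, $bc=cb+h(\delta+\alpha)b$. *)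

(* Defs.v *)
From HB Require Import structures.
From mathcomp Require Import all_boot all_order all_algebra.
Set Implicit Arguments. Unset Strict Implicit. Unset Printing Implicit Defensive.
Import GRing.Theory.
Local Open Scope ring_scope.

(* Naming: a, d (even, invertible), be = beta, ga = gamma (odd), h odd
   Grassmann parameter, al = alpha = da, de = delta = dd (odd),
   b = d beta, c = d gamma (even).  ai, di are two-sided inverses of a, d;
   Dhi is a two-sided inverse of D_h. *)

Section Gamma.
Variable (K : fieldType) (G : algType K).

Definition Dh (a d be ga di : G) : G := a * di - be * di * ga * di.

Definition TinvA (a d be ga ai di : G) : G := ai + ai * be * di * ga * ai.
Definition TinvB (a d be ga ai di : G) : G := - (ai * be * di).
Definition TinvC (a d be ga ai di : G) : G := - (di * ga * ai).
Definition TinvD (a d be ga ai di : G) : G := di + di * ga * ai * be * di.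

Definition Gamma_rels (h a d be ga al de b c ai di Dhi : G) : Prop :=
  let D := Dh a d be ga di in
  [/\
  [/\ a * ai = 1, ai * a = 1, d * di = 1, di * d = 1 & (D * Dhi = 1 /\ Dhi * D = 1)],
  [/\ h * h = 0, h * a = a * h, h * d = d * h, h * be = - (be * h)
      & [/\ h * ga = - (ga * h), h * al = - (al * h), h * de = - (de * h),
                                h * b = b * h & h * c = c * h]],
  [/\ a * be = be * a,
      a * ga = ga * a + h * a ^+ 2 * (1 - Dhi),
      d * be = be * d,
      d * ga = ga * d + h * d ^+ 2 * (D - 1)
    & [/\ be ^+ 2 = 0,
          ga ^+ 2 = h * ga * d * (1 - D),
          be * ga = - (ga * be) + h * be * d * (1 - D)
        & a * d = d * a + h * be * d * (D - 1)]],
  [/\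
   [/\ a * al = al * a + h * (al * be - b * a),
       a * b = b * a - h * b * be,
       a * c = c * a + h * (al * a - c * be + de * a)
     & a * de = de * a + h * (b * a + de * be)],
   [/\ be * al = - (al * be) + h * b * be,
       be * b = b * be,
       be * c = c * be + h * (al + de) * be
     & be * de = - (de * be) - h * b * be],
   [/\ ga * al = - (al * ga) + h * (al * a + al * d + b * ga),
       ga * b = b * ga + h * b * (a + d),
       ga * c = c * ga + h * (al * ga + c * a + c * d + de * ga)
     & ga * de = - (de * ga) + h * (de * a + de * d - b * ga)]
   & [/\ d * al = al * d - h * (al * be + b * d),
       d * b = b * d + h * b * be,
       d * c = c * d + h * (al * d + c * be + de * d)
     & d * de = de * d + h * (b * d - de * be)]]
  &
  [/\ al * b = b * al + h * b ^+ 2,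
      al * c = c * al + h * (c * b + de * al),
      de * b = b * de - h * b ^+ 2,
      de * c = c * de - h * (c * b - al * de)
    & [/\ al ^+ 2 = h * al * b,
          al * de = - (de * al) + h * (de - al) * b,
          de ^+ 2 = - (h * de * b)
        & b * c = c * b + h * (de + al) * b]]].

End Gamma.

(* Main.v *)
Require Import Defs.
From HB Require Import structures.
From mathcomp Require Import all_boot all_order all_algebra.
Import GRing.Theory.
Local Open Scope ring_scope.
Set Implicit Arguments. Unset Strict Implicit. Unset Printing Implicit Defensive.


Inductive gen := gH | gC | gB | gDE | gAL | gGA | gBE | gD | gDI | gA | gAI | gDHI.

Definition idx g := match g with gH=>0 | gC=>1 | gB=>2 | gDE=>3 | gAL=>4 | gGA=>5
  | gBE=>6 | gD=>7 | gDI=>8 | gA=>9 | gAI=>10 | gDHI=>11 end%N.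
Lemma idx_inj : injective idx. Proof. by do 2 case. Qed.
Definition gen_eqb x y := (idx x == idx y)%N.
Lemma gen_eqP : Equality.axiom gen_eqb.
Proof. move=> x y; apply: (iffP eqP); [exact: idx_inj | by move->]. Qed.
HB.instance Definition _ := hasDecEq.Build gen gen_eqP.

Definition odd_g g := match g with gBE | gGA | gAL | gDE => true | _ => false end.

Inductive expr := EAt of gen | E0 | E1 | EAdd of expr & expr | EOpp of expr | EMul of expr & expr.
Declare Scope ex_scope. Delimit Scope ex_scope with ex. Bind Scope ex_scope with expr.
Notation "x + y" := (EAdd x y) : ex_scope.
Notation "- x" := (EOpp x) : ex_scope.
Notation "x - y" := (EAdd x (EOpp y)) : ex_scope.
Notation "x * y" := (EMul x y) : ex_scope.
Notation h_ := (EAt gH). Notation a_ := (EAt gA). Notation d_ := (EAt gD).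
Notation be_ := (EAt gBE). Notation ga_ := (EAt gGA). Notation al_ := (EAt gAL).
Notation de_ := (EAt gDE). Notation b_ := (EAt gB). Notation c_ := (EAt gC).
Notation ai_ := (EAt gAI). Notation di_ := (EAt gDI). Notation dhi_ := (EAt gDHI).

Definition word := seq gen.
Definition poly := seq (int * word).

Definition pscale (m : int * word) (q : poly) : poly := [seq (m.1 * n.1, m.2 ++ n.2) | n <- q].
Definition pmul (p q : poly) : poly := foldr (fun m acc => pscale m q ++ acc) [::] p.
Definition pneg (p : poly) : poly := [seq (- m.1, m.2) | m <- p].

Fixpoint to_poly (e : expr) : poly :=
  match e with
  | EAt g => [:: (1, [:: g])]
  | E0 => [::]
  | E1 => [:: (1, [::])]
  | EAdd e1 e2 => to_poly e1 ++ to_poly e2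
  | EOpp e1 => pneg (to_poly e1)
  | EMul e1 e2 => pmul (to_poly e1) (to_poly e2)
  end.

Inductive rres := Swap of bool & expr | Repl of expr.

Definition eD := (a_ * di_ - be_ * di_ * ga_ * di_)%ex.
Definition eX := (d_ * ai_ + be_ * ga_ * ai_ * ai_)%ex.

Definition base (x y : gen) : option rres :=
 match x, y with
 | gH, gH => Some (Repl E0)
 | _, gH => Some (Swap (odd_g x) E0)
 | gB, gC => Some (Swap false (h_ * (de_ + al_) * b_))
 | gDE, gC => Some (Swap false (- (h_ * (c_ * b_ - al_ * de_))))
 | gDE, gB => Some (Swap false (- (h_ * (b_ * b_))))
 | gAL, gC => Some (Swap false (h_ * (c_ * b_ + de_ * al_)))
 | gAL, gB => Some (Swap false (h_ * (b_*b_)))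
 | gAL, gDE => Some (Swap true (h_ * (de_ - al_) * b_))
 | gAL, gAL => Some (Repl (h_ * al_ * b_))
 | gDE, gDE => Some (Repl (- (h_ * de_ * b_)))
 | gGA, gAL => Some (Swap true (h_ * (al_ * a_ + al_ * d_ + b_ * ga_)))
 | gGA, gB => Some (Swap false (h_ * b_ * (a_ + d_)))
 | gGA, gC => Some (Swap false (h_ * (al_ * ga_ + c_ * a_ + c_ * d_ + de_ * ga_)))
 | gGA, gDE => Some (Swap true (h_ * (de_ * a_ + de_ * d_ - b_ * ga_)))
 | gBE, gAL => Some (Swap true (h_ * b_ * be_))
 | gBE, gB => Some (Swap false E0)
 | gBE, gC => Some (Swap false (h_ * (al_ + de_) * be_))
 | gBE, gDE => Some (Swap true (- (h_ * b_ * be_)))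
 | gD, gAL => Some (Swap false (- (h_ * (al_ * be_ + b_ * d_))))
 | gD, gB => Some (Swap false (h_ * b_ * be_))
 | gD, gC => Some (Swap false (h_ * (al_ * d_ + c_ * be_ + de_ * d_)))
 | gD, gDE => Some (Swap false (h_ * (b_ * d_ - de_ * be_)))
 | gA, gAL => Some (Swap false (h_ * (al_ * be_ - b_ * a_)))
 | gA, gB => Some (Swap false (- (h_ * b_ * be_)))
 | gA, gC => Some (Swap false (h_ * (al_ * a_ - c_ * be_ + de_ * a_)))
 | gA, gDE => Some (Swap false (h_ * (b_ * a_ + de_ * be_)))
 | gBE, gGA => Some (Swap true (h_ * be_ * d_ * (E1 - eD)))
 | gD, gGA => Some (Swap false (h_ * (d_ * d_) * (eD - E1)))
 | gD, gBE => Some (Swap false E0)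
 | gA, gGA => Some (Swap false (h_ * (a_ * a_) * (E1 - dhi_)))
 | gA, gBE => Some (Swap false E0)
 | gA, gD => Some (Swap false (h_ * be_ * d_ * (eD - E1)))
 | gBE, gBE => Some (Repl E0)
 | gGA, gGA => Some (Repl (h_ * ga_ * d_ * (E1 - eD)))
 | gA, gAI | gAI, gA | gD, gDI | gDI, gD => Some (Repl E1)
 | _, _ => None
 end.

Definition sgE (s : bool) e := if s then EOpp e else e.
Definition invr (yi : gen) (r : option rres) : option rres :=
  match r with Some (Swap s e) => Some (Swap s (sgE s (EOpp (EMul (EMul (EAt yi) e) (EAt yi)))))
  | _ => None end.

Definition lvl1 x y : option rres :=
  match base x y with Some r => Some r | None =>
    match x, y with
    | gA, gDI => invr gDI (base gA gD)
    | gDI, _ => invr gDI (base gD y)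
    | _, _ => None end end.

Definition rule x y : option rres :=
  match lvl1 x y with Some r => Some r | None =>
    match x with gAI => invr gAI (lvl1 gA y) | _ => None end end.

Definition rpoly x y (r : rres) : poly :=
  match r with Swap s e => ((if s then -1 else 1), [:: y; x]) :: to_poly e
  | Repl e => to_poly e end.

Definition wrap (p : poly) (rest : word) : poly := [seq (m.1, m.2 ++ rest) | m <- p].
Definition consw x (p : poly) : poly := [seq (m.1, x :: m.2) | m <- p].
Definition hasH (m : int * word) := gH \in m.2.

Fixpoint step0 (oh : bool) (w : word) : option poly :=
  match w with
  | x :: t => match t with
     | y :: rest => match (if oh && (y != gH) then None else rule x y) with
                    | Some r => Some (wrap (rpoly x y r) rest)
                    | None => omap (consw x) (step0 oh t) end
     | [::] => None end
  | [::] => None end.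

Fixpoint steph (dhi : option poly) (w : word) : option poly :=
  match w with
  | x :: t =>
     let g := match t with
        | y :: rest => match rule x y with
                       | Some r => Some (wrap [seq m <- rpoly x y r | ~~ hasH m] rest)
                       | None => omap (consw x) (steph dhi t) end
        | [::] => None end in
     match dhi with Some q => if x == gDHI then Some (wrap q t) else g | None => g end
  | [::] => None end.

Definition step dhi (w : word) : option poly :=
  match w with gH :: t => omap (consw gH) (steph dhi t) | _ => step0 (gH \in w) w end.

Fixpoint nf dhi (n : nat) (p : poly) : poly :=
  match n with 0%N => p | n.+1 =>
    flatten [seq match step dhi m.2 with None => [:: m]
                 | Some q => nf dhi n (pscale (m.1, [::]) q) end | m <- p] end.

Fixpoint addm (m : int * word) (p : poly) : poly :=
  match p with [::] => [:: m]
  | m' :: t => if m'.2 == m.2 then (m'.1 + m.1, m'.2) :: t else m' :: addm m t end.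
Definition collect (p : poly) : poly := [seq m <- foldr addm [::] p | m.1 != 0].

Definition dhiq := Some (to_poly eX).
Definition NF dhi e := collect (nf dhi 200 (to_poly e)).


Definition sg {R : nzRingType} (s : bool) (v : R) := if s then - v else v.

Section Sound.
Variable R : nzRingType.
Variable env : gen -> R.

Fixpoint iw (w : word) : R := if w is g :: t then env g * iw t else 1.
Fixpoint ip (p : poly) : R := if p is m :: t then iw m.2 *~ m.1 + ip t else 0.
Fixpoint ie (e : expr) : R :=
  match e with
  | EAt g => env g | E0 => 0 | E1 => 1
  | EAdd e1 e2 => ie e1 + ie e2 | EOpp e1 => - ie e1 | EMul e1 e2 => ie e1 * ie e2 end.

Lemma iw_cat w1 w2 : iw (w1 ++ w2) = iw w1 * iw w2.
Proof. elim: w1 => [|g t IH] /=; first by rewrite mul1r. by rewrite IH mulrA. Qed.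
Lemma ip_cat p q : ip (p ++ q) = ip p + ip q.
Proof. elim: p => [|m t IH] /=; first by rewrite add0r. by rewrite IH addrA. Qed.
Lemma ip_pneg p : ip (pneg p) = - ip p.
Proof. elim: p => [|m t IH] /=; first by rewrite oppr0. by rewrite IH mulrNz opprD. Qed.
Lemma ip_pscale m q : ip (pscale m q) = iw m.2 *~ m.1 * ip q.
Proof.
elim: q => [|n t IH] /=; first by rewrite mulr0.
by rewrite IH mulrDr iw_cat mulrzA !mulrzAr !mulrzAl.
Qed.
Lemma ip_pmul p q : ip (pmul p q) = ip p * ip q.
Proof.
elim: p => [|m t IH] /=; first by rewrite mul0r.
by rewrite ip_cat IH ip_pscale mulrDl.
Qed.
Lemma ip_to_poly e : ip (to_poly e) = ie e.
Proof.
elim: e => [g| | |e1 IH1 e2 IH2|e1 IH1|e1 IH1 e2 IH2] /=.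
- by rewrite mulr1 addr0.
- by [].
- by rewrite addr0.
- by rewrite ip_cat IH1 IH2.
- by rewrite ip_pneg IH1.
- by rewrite ip_pmul IH1 IH2.
Qed.

Definition rsound x y (r : rres) : Prop :=
  match r with
  | Swap s e => env x * env y = sg s (env y * env x) + ie e
  | Repl e => env x * env y = ie e end.

Lemma rpoly_ok x y r : rsound x y r -> env x * env y = ip (rpoly x y r).
Proof.
case: r => [s e|e] /= ->; rewrite ip_to_poly //.
by case: s => /=; rewrite mulr1 ?mulrN1z.
Qed.

Lemma invr_r_gen x y yi R0 r' : env y * env yi = 1 -> env yi * env y = 1 ->
  (forall r, R0 = Some r -> rsound x y r) -> invr yi R0 = Some r' -> rsound x yi r'.
Proof.
move=> e1 e2; case: R0 => [[s e|e]|] H //=.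
move: H => /(_ _ erefl) /= Hxy [<-] /=.
have H1 : env yi * env x = sg s (env x * env yi) + env yi * ie e * env yi.
  rewrite -[env yi * env x]mulr1 -e1 mulrA -(mulrA _ (env x)) Hxy.
  clear Hxy; case: s => /=; rewrite mulrDr mulrDl ?mulrN ?mulNr !mulrA e2 mul1r //.
clear Hxy; case: s H1 => /= H1.
  by rewrite H1 opprD !opprK subrK.
by rewrite H1 addrK.
Qed.

Lemma invr_l_gen x xi y R0 r' : env x * env xi = 1 -> env xi * env x = 1 ->
  (forall r, R0 = Some r -> rsound x y r) -> invr xi R0 = Some r' -> rsound xi y r'.
Proof.
move=> e1 e2; case: R0 => [[s e|e]|] H //=.
move: H => /(_ _ erefl) /= Hxy [<-] /=.
have H1 : env y * env xi = sg s (env xi * env y) + env xi * ie e * env xi.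
  rewrite -[env y * env xi]mul1r -e2 -mulrA -!mulrA (mulrA (env x)) Hxy.
  clear Hxy; case: s => /=; rewrite mulrDl mulrDr ?mulrN ?mulNr -!mulrA e1 mulr1 !mulrA ?mulrN //.
clear Hxy; case: s H1 => /= H1.
  by rewrite H1 opprD !opprK subrK.
by rewrite H1 addrK.
Qed.

Hypothesis rule_ok : forall x y r, rule x y = Some r -> rsound x y r.

Lemma wrap_ok p rest : ip (wrap p rest) = ip p * iw rest.
Proof.
elim: p => [|m t IH] /=; first by rewrite mul0r.
by rewrite IH mulrDl iw_cat mulrzAl.
Qed.
Lemma consw_ok x p : ip (consw x p) = env x * ip p.
Proof.
elim: p => [|m t IH] /=; first by rewrite mulr0.
by rewrite IH mulrDr mulrzAr.
Qed.

Lemma step0_ok oh w p : step0 oh w = Some p -> iw w = ip p.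
Proof.
elim: w p => [|x t IH] p //=.
case: t IH => [|y rest] IH //.
case: ifP => _.
  case E: (step0 oh (y :: rest)) => [q|] //= [<-].
  by rewrite consw_ok -(IH _ E).
case Er: (rule x y) => [r|].
  case=> <-; rewrite wrap_ok -rpoly_ok; last exact: rule_ok.
  by rewrite /= mulrA.
case E: (step0 oh (y :: rest)) => [q|] //= [<-].
by rewrite consw_ok -(IH _ E).
Qed.

Hypothesis hpar : forall g, env gH * env g = sg (odd_g g) (env g * env gH).
Hypothesis hhh : env gH * env gH = 0.

Lemma sgM s (u v : R) : sg s u * v = sg s (u * v).
Proof. by case: s => //=; rewrite mulNr. Qed.
Lemma Msg s (u v : R) : u * sg s v = sg s (u * v).
Proof. by case: s => //=; rewrite mulrN. Qed.
Lemma sg_sg s t (u : R) : sg s (sg t u) = sg (s (+) t) u.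
Proof. by case: s; case: t => //=; rewrite opprK. Qed.
Lemma sg0 s : sg s (0 : R) = 0.
Proof. by case: s => //=; rewrite oppr0. Qed.

Lemma hw w : exists s, env gH * iw w = sg s (iw w * env gH).
Proof.
elim: w => [|g t [s IH]] /=; first by exists false; rewrite mulr1 mul1r.
exists (odd_g g (+) s).
by rewrite mulrA hpar sgM -mulrA IH Msg sg_sg mulrA.
Qed.

Lemma hctx q (X Y : R) : env gH * X = env gH * Y -> env gH * iw q * X = env gH * iw q * Y.
Proof.
move=> HXY; have [s ->] := hw q.
by rewrite !sgM -!mulrA HXY.
Qed.

Lemma kill q m : gH \in m -> env gH * iw q * iw m = 0.
Proof.
case/splitPr=> m1 m2; rewrite iw_cat /= mulrA.
rewrite -(mulrA (env gH) (iw q)) -iw_cat.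
have [s ->] := hw (q ++ m1).
by rewrite sgM -mulrA (mulrA (env gH)) hhh mul0r mulr0 sg0.
Qed.

Lemma kill_poly q p : all hasH p -> env gH * iw q * ip p = 0.
Proof.
elim: p => [|m t IH] /=; first by rewrite mulr0.
case/andP=> Hm Ht; rewrite mulrDr IH // addr0 mulrzAr kill //.
by rewrite mul0rz.
Qed.

Lemma filter_split p : ip p = ip [seq m <- p | ~~ hasH m] + ip [seq m <- p | hasH m].
Proof.
elim: p => [|m t IH] /=; first by rewrite addr0.
by case: (hasH m) => /=; rewrite IH ?addrA // (addrC (iw m.2 *~ m.1)).
Qed.

Variable dhi : option poly.
Hypothesis dhi_ok : forall q, dhi = Some q -> env gH * env gDHI = env gH * ip q.

Lemma steph_ok w p : steph dhi w = Some p ->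
  forall q, env gH * iw q * iw w = env gH * iw q * ip p.
Proof.
elim: w p => [|x t IH] p //=.
have Hg : forall p, match t with
        | y :: rest => match rule x y with
                       | Some r => Some (wrap [seq m <- rpoly x y r | ~~ hasH m] rest)
                       | None => omap (consw x) (steph dhi t) end
        | [::] => None end = Some p ->
    forall q, env gH * iw q * (env x * iw t) = env gH * iw q * ip p.
  clear p; move=> p; case: t IH => [|y rest] IH //.
  case Er: (rule x y) => [r|].
    case=> <- q; rewrite wrap_ok.
    have -> : env x * iw (y :: rest) = ip (rpoly x y r) * iw rest.
      rewrite -rpoly_ok; [by rewrite /= mulrA | exact: rule_ok].
    rewrite (filter_split (rpoly x y r)) mulrDl mulrDr.
    rewrite -[ip [seq m <- _ | hasH m] * iw rest]wrap_ok kill_poly ?addr0 ?wrap_ok //.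
    rewrite all_map; apply/allP=> m; rewrite mem_filter => /andP[Hm _] /=.
    by move: Hm; rewrite /hasH /= mem_cat => ->.
  case E: (steph dhi (y :: rest)) => [p'|] //= [<-] q.
  have := IH _ E (q ++ [:: x]); rewrite iw_cat /= mulr1 consw_ok.
  by rewrite !mulrA => ->.
move: Hg; case Ed: dhi => [q0|] Hg; last exact: Hg.
case: ifP => [/eqP Ex|_]; last exact: Hg.
case=> <- q; subst x; rewrite wrap_ok !mulrA.
by rewrite /= ?mulrA (hctx q (dhi_ok Ed)).
Qed.

Lemma step_ok w p : step dhi w = Some p -> iw w = ip p.
Proof.
case: w => [|x t] //.
case: x; try exact: step0_ok.
rewrite /=; case E: (steph dhi t) => [q|] //= [<-].
have := steph_ok E [::]; rewrite /= !mulr1 => ->.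
by rewrite consw_ok.
Qed.

Lemma nf_ok n p : ip (nf dhi n p) = ip p.
Proof.
elim: n p => [|n IH] p //=.
elim: p => [|m t IHp] //=.
rewrite ip_cat IHp; congr (_ + _).
case E: (step dhi m.2) => [q|] /=.
  by rewrite IH ip_pscale /= (step_ok E) mulrzAl mul1r.
by rewrite addr0.
Qed.

Lemma addm_ok m p : ip (addm m p) = iw m.2 *~ m.1 + ip p.
Proof.
elim: p => [|m' t IH] /=; first by [].
case: eqP => [E|_] /=.
  by rewrite mulrzDr E addrA (addrC (iw m.2 *~ m'.1)).
by rewrite IH addrCA.
Qed.

Lemma collect_ok p : ip (collect p) = ip p.
Proof.
have -> : ip p = ip (foldr addm [::] p).
  elim: p => [|m t IH] //=; by rewrite addm_ok IH.
rewrite /collect; elim: (foldr addm [::] p) => [|m t IH] //=.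
case: eqP => [E|_] /=; last by rewrite IH.
by rewrite IH E mulr0z add0r.
Qed.

Lemma NF_ok e1 e2 : NF dhi (EAdd e1 (EOpp e2)) = [::] -> ie e1 = ie e2.
Proof.
rewrite /NF => H; apply/eqP; rewrite -subr_eq0.
by rewrite -[_ - _]/(ie (EAdd e1 (EOpp e2))) -ip_to_poly -(nf_ok 200) -collect_ok H.
Qed.

End Sound.


Section Conc.
Variables (K : fieldType) (G : algType K) (h a d be ga al de b c ai di Dhi : G).
Definition envc g := match g with gH => h | gC => c | gB => b | gDE => de | gAL => al
  | gGA => ga | gBE => be | gD => d | gDI => di | gA => a | gAI => ai | gDHI => Dhi end.
Hypotheses (aai : a * ai = 1) (aia : ai * a = 1) (ddi : d * di = 1) (did : di * d = 1)
  (DDhi : Dh a d be ga di * Dhi = 1) (DhiD : Dhi * Dh a d be ga di = 1).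
Hypotheses (hh : h * h = 0) (ha : h * a = a * h) (hd : h * d = d * h) (hbe : h * be = - (be * h))
  (hga : h * ga = - (ga * h)) (hal : h * al = - (al * h)) (hde : h * de = - (de * h))
  (hb : h * b = b * h) (hc : h * c = c * h).

Lemma hinv x xi : h * x = x * h -> x * xi = 1 -> xi * x = 1 -> h * xi = xi * h.
Proof.
move=> hx e1 e2.
by rewrite -[h * xi]mul1r -e2 -mulrA (mulrA x) -hx -!mulrA e1 mulr1.
Qed.

Lemma hai : h * ai = ai * h. Proof. exact: hinv ha aai aia. Qed.
Lemma hdi : h * di = di * h. Proof. exact: hinv hd ddi did. Qed.
Lemma hD : h * Dh a d be ga di = Dh a d be ga di * h.
Proof.
rewrite /Dh mulrBr mulrBl !mulrA ha -(mulrA a) hdi mulrA; congr (_ - _).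
rewrite hbe !mulNr -(mulrA be h) hdi mulrA -(mulrA _ h ga) hga mulrN !mulNr opprK !mulrA.
by rewrite -(mulrA _ h di) hdi mulrA.
Qed.
Lemma hDhi : h * Dhi = Dhi * h.
Proof. exact: hinv hD DDhi DhiD. Qed.

Lemma hparc g : envc gH * envc g = sg (odd_g g) (envc g * envc gH).
Proof.
case: g => /=; by [rewrite ?hai ?hdi ?hDhi].
Qed.

Let D := Dh a d be ga di.
Hypotheses (abe : a * be = be * a) (aga : a * ga = ga * a + h * a ^+ 2 * (1 - Dhi))
  (dbe : d * be = be * d) (dga : d * ga = ga * d + h * d ^+ 2 * (D - 1))
  (be2 : be ^+ 2 = 0) (ga2 : ga ^+ 2 = h * ga * d * (1 - D))
  (bega : be * ga = - (ga * be) + h * be * d * (1 - D))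
  (ad : a * d = d * a + h * be * d * (D - 1)).
Hypotheses (aal : a * al = al * a + h * (al * be - b * a))
  (ab : a * b = b * a - h * b * be)
  (ac : a * c = c * a + h * (al * a - c * be + de * a))
  (ade : a * de = de * a + h * (b * a + de * be))
  (beal : be * al = - (al * be) + h * b * be)
  (beb : be * b = b * be)
  (bec : be * c = c * be + h * (al + de) * be)
  (bede : be * de = - (de * be) - h * b * be)
  (gaal : ga * al = - (al * ga) + h * (al * a + al * d + b * ga))
  (gab : ga * b = b * ga + h * b * (a + d))
  (gac : ga * c = c * ga + h * (al * ga + c * a + c * d + de * ga))
  (gade : ga * de = - (de * ga) + h * (de * a + de * d - b * ga))
  (dal : d * al = al * d - h * (al * be + b * d))
  (db : d * b = b * d + h * b * be)
  (dc : d * c = c * d + h * (al * d + c * be + de * d))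
  (dde : d * de = de * d + h * (b * d - de * be)).
Hypotheses (alb : al * b = b * al + h * b ^+ 2)
  (alc : al * c = c * al + h * (c * b + de * al))
  (deb : de * b = b * de - h * b ^+ 2)
  (dec : de * c = c * de - h * (c * b - al * de))
  (al2 : al ^+ 2 = h * al * b)
  (alde : al * de = - (de * al) + h * (de - al) * b)
  (de2 : de ^+ 2 = - (h * de * b))
  (bc : b * c = c * b + h * (de + al) * b).

Lemma base_ok x y r : base x y = Some r -> rsound envc x y r.
Proof.
have E := (expr2 a, expr2 d, expr2 b, expr2 be, expr2 ga, expr2 al, expr2 de).
case: x; case: y => //= [] [<-] /=.
all: rewrite ?addr0 -?expr2.
all: try first [ done | assumption | by rewrite -?ga2 ?expr2 ].
all: by rewrite ?hde ?hal ?hga ?hbe ?hdi ?hai ?hDhi ?opprK.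
Qed.

Lemma rule_okc x y r : rule x y = Some r -> rsound envc x y r.
Proof.
have lvl1_ok : forall x y r, lvl1 x y = Some r -> rsound envc x y r.
  move=> x0 y0 r0; rewrite /lvl1; case Eb: (base x0 y0) => [r1|].
    by case=> <-; exact: base_ok Eb.
  case: x0 Eb => // Eb.
    by apply: (invr_l_gen (x:=gD) (R0 := base gD y0)) => //; exact: base_ok.
  case: y0 Eb => // _.
  by apply: (invr_r_gen (y:=gD) (R0 := base gA gD)) => //; exact: base_ok.
rewrite /rule; case E1: lvl1 => [r1|]; first by case=> <-; exact: lvl1_ok.
case: x E1 => // _.
by apply: (invr_l_gen (x:=gA) (R0 := lvl1 gA y)) => //; exact: lvl1_ok.
Qed.

Lemma hparc' g : envc gH * envc g = sg (odd_g g) (envc g * envc gH).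
Proof. exact: hparc. Qed.

Lemma dhi_okc q : dhiq = Some q -> envc gH * envc gDHI = envc gH * ip envc q.
Proof.
move=> Hq; have -> : q = to_poly eX by case: Hq.
rewrite ip_to_poly /=.
have H0 : ie envc (h_ * (eD * eX - E1))%ex = ie envc E0.
  by apply: (@NF_ok _ envc rule_okc hparc hh None) => //; vm_compute.
move: H0 => /= /eqP; rewrite mulrBr mulr1 subr_eq0 => /eqP H0.
rewrite hDhi -[in Dhi * h]H0 (mulrA h) hD !mulrA DhiD mul1r.
by [].
Qed.

Definition eAi := (ai_ + ai_ * be_ * di_ * ga_ * ai_)%ex.
Definition eBi := (- (ai_ * be_ * di_))%ex.
Definition eCi := (- (di_ * ga_ * ai_))%ex.
Definition eDi := (di_ + di_ * ga_ * ai_ * be_ * di_)%ex.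
Definition ew1 := (al_ * eAi + b_ * eCi)%ex.
Definition eu := (al_ * eBi + b_ * eDi)%ex.
Definition ew2 := (de_ * eDi + c_ * eBi)%ex.
Definition ev := (c_ * eAi + de_ * eCi)%ex.

Ltac fin e1 e2 := apply: (@NF_ok _ envc rule_okc hparc hh dhiq dhi_okc e1 e2); vm_compute; reflexivity.

Lemma main_conc :
  let A := TinvA a d be ga ai di in
  let B := TinvB a d be ga ai di in
  let C := TinvC a d be ga ai di in
  let D := TinvD a d be ga ai di in
  let w1 := al * A + b * C in
  let u  := al * B + b * D in
  let w2 := de * D + c * B in
  let v  := c * A + de * C in
  [/\
   [/\ w1 * al = - (al * w1) - h * al * u,
       w1 * b = b * w1 - h * b * u,
       w1 * c = c * w1 - h * c * u
     & w1 * de = - (de * w1) - h * de * u],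
   [/\ u * al = al * u, u * b = b * u, u * c = c * u & u * de = de * u],
   [/\ v * al = al * v + h * al * (w1 - w2),
       v * b = b * v - h * b * (w1 - w2),
       v * c = c * v - h * c * (w1 - w2)
     & v * de = de * v + h * de * (w1 - w2)]
  & [/\ w2 * al = - (al * w2) - h * al * u,
       w2 * b = b * w2 - h * b * u,
       w2 * c = c * w2 - h * c * u
     & w2 * de = - (de * w2) - h * de * u]].
Proof.
move=> A B C D' w1 u w2 v.
split; split.
- fin (ew1 * al_)%ex (- (al_ * ew1) - h_ * al_ * eu)%ex.
- fin (ew1 * b_)%ex (b_ * ew1 - h_ * b_ * eu)%ex.
- fin (ew1 * c_)%ex (c_ * ew1 - h_ * c_ * eu)%ex.
- fin (ew1 * de_)%ex (- (de_ * ew1) - h_ * de_ * eu)%ex.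
- fin (eu * al_)%ex (al_ * eu)%ex.
- fin (eu * b_)%ex (b_ * eu)%ex.
- fin (eu * c_)%ex (c_ * eu)%ex.
- fin (eu * de_)%ex (de_ * eu)%ex.
- fin (ev * al_)%ex (al_ * ev + h_ * al_ * (ew1 - ew2))%ex.
- fin (ev * b_)%ex (b_ * ev - h_ * b_ * (ew1 - ew2))%ex.
- fin (ev * c_)%ex (c_ * ev - h_ * c_ * (ew1 - ew2))%ex.
- fin (ev * de_)%ex (de_ * ev + h_ * de_ * (ew1 - ew2))%ex.
- fin (ew2 * al_)%ex (- (al_ * ew2) - h_ * al_ * eu)%ex.
- fin (ew2 * b_)%ex (b_ * ew2 - h_ * b_ * eu)%ex.
- fin (ew2 * c_)%ex (c_ * ew2 - h_ * c_ * eu)%ex.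
- fin (ew2 * de_)%ex (- (de_ * ew2) - h_ * de_ * eu)%ex.
Qed.
End Conc.

Theorem mainTheorem8 (K : fieldType) (G : algType K)
    (charK : [pchar K] =i pred0)
    (h a d be ga al de b c ai di Dhi : G) :
  Gamma_rels h a d be ga al de b c ai di Dhi ->
  let A := TinvA a d be ga ai di in
  let B := TinvB a d be ga ai di in
  let C := TinvC a d be ga ai di in
  let D := TinvD a d be ga ai di in
  let w1 := al * A + b * C in
  let u  := al * B + b * D in
  let w2 := de * D + c * B in
  let v  := c * A + de * C in
  [/\
   [/\ w1 * al = - (al * w1) - h * al * u,
       w1 * b = b * w1 - h * b * u,
       w1 * c = c * w1 - h * c * u
     & w1 * de = - (de * w1) - h * de * u],
   [/\ u * al = al * u, u * b = b * u, u * c = c * u & u * de = de * u],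
   [/\ v * al = al * v + h * al * (w1 - w2),
       v * b = b * v - h * b * (w1 - w2),
       v * c = c * v - h * c * (w1 - w2)
     & v * de = de * v + h * de * (w1 - w2)]
  & [/\ w2 * al = - (al * w2) - h * al * u,
       w2 * b = b * w2 - h * b * u,
       w2 * c = c * w2 - h * c * u
     & w2 * de = - (de * w2) - h * de * u]].
Proof.
move=> [[aai aia ddi did [DDhi DhiD]] [hh ha hd hbe [hga hal hde hb hc]]
  [abe aga dbe dga [be2 ga2 bega ad]]
  [[aal ab ac ade] [beal beb bec bede] [gaal gab gac gade] [dal db dc dde]]
  [alb alc deb dec [al2 alde de2 bc]]].
by apply: (@main_conc K G h a d be ga al de b c ai di Dhi).
Qed.
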